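(* For $\zeta\in[a,\tau)$ define $$\widetilde{M_1}(\zeta)=\frac{1}{\epsilon}\left[(1-\tau_1)+\left(\Lambda e^{\epsilon(\omega-\tau)}-\Lambda-(1-\tau_1)\right)e^{\epsilon(\tau-\zeta)}\right],$$ and let $\Lambda_{FP}=\frac{(1-\tau_1)\left(1-e^{-\epsilon(\tau-a)}\right)}{e^{\epsilon(\omega-\tau)}-1}$. If $\Lambda\le\Lambda_{FP}$, then there exists a critical age $\hat{\zeta}\in[a,\tau)$ such that $\widetilde{M_1}(\zeta)<0$ for $a\le\zeta<\hat{\zeta}$, $\widetilde{M_1}(\hat{\zeta})=0$, and $\widetilde{M_1}(\zeta)>0$ for $\hat{\zeta}<\zeta<\tau$ (so that participants younger than $\hat\zeta$ prefer individual savings to PAYGO, older ones prefer PAYGO, and age $\hat\zeta$ is indifferent). If $\Lambda>\Lambda_{FP}$, then $\widetilde{M_1}(\zeta)>0$ for all $\zeta\in[a,\tau)$ (all these participants prefer PAYGO to individual savings, their utility increasing in $\theta$).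
   Context: Parameters: $r>0$, $\mu>r$, $\sigma>0$, real $\gamma,\xi$; $\nu=(\mu-r)/\sigma$ and $\epsilon=\gamma-r-\xi\nu\neq0$. Ages $a<\tau<\omega$; salary tax rate $\tau_1\in[0,1)$. With survival function $s(x)=e^{-A_m(x-a)-\frac{B_m}{\ln c}(c^x-c^a)}$ (Makeham constants $A_m,B_m,c$) and population growth rate $\rho$, $\Lambda=\frac{\int_a^\tau e^{-(\rho+A_m)(u-a)-\frac{B_m}{\ln c}(c^u-c^a)}du}{\int_\tau^\omega e^{-(\rho+A_m)(u-a)-\frac{B_m}{\ln c}(c^u-c^a)}du}>0$ (inverse dependency ratio). Interpretation: $\zeta$ is a participant's age at the decision time; the participant's value function is $\frac1\delta L[x+(\widetilde{M_1}\theta+\widetilde{M_2}k+M_3)w+Ny]^\delta$ with $L>0$, so the sign of $\widetilde{M_1}(\zeta)$ is the sign of the effect of raising the PAYGO contribution rate $\theta$ (relative to individual savings). *)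

(* Defs.v *)
From Stdlib Require Import Reals.
From Coquelicot Require Import Coquelicot.
Open Scope R_scope.

Definition makeham_weight (A_m B_m c rho a u : R) : R :=
  exp (- (rho + A_m) * (u - a) - B_m / ln c * (Rpower c u - Rpower c a)).

Definition Lambda (A_m B_m c rho a tau omega : R) : R :=
  RInt (makeham_weight A_m B_m c rho a) a tau /
  RInt (makeham_weight A_m B_m c rho a) tau omega.

Definition nu (r mu sigma : R) : R := (mu - r) / sigma.
Definition eps (r mu sigma gamma xi : R) : R := gamma - r - xi * nu r mu sigma.

Definition M1t (e Lam tau1 tau omega zeta : R) : R :=
  / e * ((1 - tau1) + (Lam * exp (e * (omega - tau)) - Lam - (1 - tau1))
                        * exp (e * (tau - zeta))).

Definition Lambda_FP (e tau1 a tau omega : R) : R :=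
  (1 - tau1) * (1 - exp (- e * (tau - a))) / (exp (e * (omega - tau)) - 1).

(* Main.v *)
Require Import Defs.
From Stdlib Require Import Reals Lra Psatz.
From Coquelicot Require Import Coquelicot.
Open Scope R_scope.

Lemma w_pos A B c rho a x y : x < y -> 0 < RInt (makeham_weight A B c rho a) x y.
Proof.
intros H. apply RInt_gt_0; auto.
- intros; unfold makeham_weight; apply exp_pos.
- intros z _. apply (ex_derive_continuous (K:=R_AbsRing) (V:=R_NormedModule)).
  unfold makeham_weight, Rpower. auto_derive. auto.
Qed.

Lemma sgn_lem e tau z w : e <> 0 -> z < w ->
  0 < / e * (exp (e * (tau - z)) - exp (e * (tau - w))).
Proof.
intros He Hzw. pose proof He as He0. destruct (Rdichotomy _ _ (not_eq_sym He0)) as [Hp|Hn].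
- apply Rmult_lt_0_compat. apply Rinv_0_lt_compat; lra.
  assert (exp (e*(tau-w)) < exp (e*(tau-z))) by (apply exp_increasing; nra). lra.
- assert (e < 0) by lra.
  assert (exp (e*(tau-z)) < exp (e*(tau-w))) by (apply exp_increasing; nra).
  assert (/e < 0) by (apply Rinv_lt_0_compat; lra). nra.
Qed.

Lemma cross e K D tau : e <> 0 -> 0 < K -> D < 0 ->
  exists zh, (forall z, z < zh -> / e * (K + D * exp (e * (tau - z))) < 0) /\
             / e * (K + D * exp (e * (tau - zh))) = 0 /\
             (forall z, zh < z -> 0 < / e * (K + D * exp (e * (tau - z)))).
Proof.
intros He HK HD. exists (tau - ln (- K / D) / e).
assert (Hq : 0 < - K / D). { assert (/ D < 0) by (apply Rinv_lt_0_compat; lra). unfold Rdiv. nra. }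
assert (HE : exp (e * (tau - (tau - ln (- K / D) / e))) = - K / D).
{ replace (e * (tau - (tau - ln (- K / D) / e))) with (ln (-K/D)) by (field; exact He).
  apply exp_ln; auto. }
assert (Heq : forall z, / e * (K + D * exp (e * (tau - z))) =
   D * (/ e * (exp (e * (tau - z)) - exp (e * (tau - (tau - ln (- K / D) / e)))))).
{ intros z. rewrite HE. field. split; lra. }
split; [|split].
- intros z Hz. rewrite Heq. pose proof (sgn_lem e tau z _ He Hz). nra.
- rewrite HE. field. split; lra.
- intros z Hz. rewrite Heq.
  pose proof (sgn_lem e tau _ z He Hz).
  replace (/ e * (exp (e * (tau - z)) - exp (e * (tau - (tau - ln (- K / D) / e)))))
    with (- (/ e * (exp (e * (tau - (tau - ln (- K / D) / e))) - exp (e * (tau - z))))) by ring.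
  nra.
Qed.

Theorem theorem3p1
  (r mu sigma gamma xi tau1 a tau omega A_m B_m c rho : R)
  (hr : 0 < r) (hmu : r < mu) (hsigma : 0 < sigma)
  (heps : eps r mu sigma gamma xi <> 0)
  (htau1 : 0 <= tau1 < 1)
  (hat : a < tau) (hto : tau < omega)
  (hc : 0 < c) (hc1 : c <> 1) :
  let e := eps r mu sigma gamma xi in
  let Lam := Lambda A_m B_m c rho a tau omega in
  let M := M1t e Lam tau1 tau omega in
  (Lam <= Lambda_FP e tau1 a tau omega ->
     exists zh, a <= zh < tau /\
       (forall z, a <= z < zh -> M z < 0) /\
       M zh = 0 /\
       (forall z, zh < z < tau -> 0 < M z)) /\
  (Lambda_FP e tau1 a tau omega < Lam ->
     forall z, a <= z < tau -> 0 < M z).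
Proof.
intros e Lam M.
assert (HL : 0 < Lam).
{ unfold Lam, Lambda. unfold Rdiv. apply Rmult_lt_0_compat. apply w_pos; lra.
  apply Rinv_0_lt_compat. apply w_pos; lra. }
clearbody Lam. fold e in heps. clearbody e. pose proof heps as He0.
set (K := 1 - tau1). set (X := exp (e * (omega - tau))).
set (D := Lam * X - Lam - K).
assert (HK : 0 < K) by (unfold K; lra).
assert (HM : forall z, M z = / e * (K + D * exp (e * (tau - z)))).
{ intros z. unfold M, M1t, D, K, X. reflexivity. }
set (u := exp (e * (tau - a))). set (w := exp (- e * (tau - a))).
assert (Hu : 0 < u) by apply exp_pos.
assert (Huw : u * w = 1).
{ unfold u, w. rewrite <- exp_plus. replace (e * (tau - a) + - e * (tau - a)) with 0 by ring.
  apply exp_0. }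
assert (HFP : Lambda_FP e tau1 a tau omega = K * (1 - w) / (X - 1)) by reflexivity.
assert (Htau : 0 < M tau).
{ rewrite HM. replace (tau - tau) with 0 by ring. rewrite Rmult_0_r, exp_0.
  replace (K + D * 1) with (Lam * (X - 1)) by (unfold D; ring).
  destruct (Rdichotomy _ _ (not_eq_sym He0)) as [Hp|Hn].
  - assert (1 < X). { unfold X. rewrite <- exp_0. apply exp_increasing. nra. }
    apply Rmult_lt_0_compat. apply Rinv_0_lt_compat; lra. nra.
  - assert (X < 1). { unfold X. rewrite <- exp_0. apply exp_increasing. assert (e<0) by lra. nra. }
    assert (/e < 0) by (apply Rinv_lt_0_compat; lra). assert (Lam*(X-1)<0) by nra. nra. }
assert (HMa : M a = / e * (K + D * u)) by (rewrite HM; reflexivity).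
assert (Hcmp : Lam <= Lambda_FP e tau1 a tau omega -> M a <= 0 /\ D < 0).
{ intros Hle. rewrite HFP in Hle. rewrite HMa.
  destruct (Rdichotomy _ _ (not_eq_sym He0)) as [Hp|Hn].
  - assert (1 < X). { unfold X. rewrite <- exp_0. apply exp_increasing. nra. }
    assert (Lam * (X - 1) <= K * (1 - w)).
    { apply (Rmult_le_compat_r (X - 1)) in Hle; [|lra].
      unfold Rdiv in Hle. rewrite Rmult_assoc, Rinv_l in Hle; lra. }
    assert (K + D * u <= 0) by (unfold D; nra).
    split. assert (0 < / e) by (apply Rinv_0_lt_compat; lra). nra. nra.
  - assert (e < 0) by lra.
    assert (X < 1). { unfold X. rewrite <- exp_0. apply exp_increasing. nra. }
    assert (K * (1 - w) <= Lam * (X - 1)).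
    { apply (Rmult_le_compat_neg_l (X - 1)) in Hle; [|lra].
      unfold Rdiv in Hle. rewrite (Rmult_comm (X-1) (K * (1 - w) * / (X - 1))) in Hle.
      rewrite Rmult_assoc, Rinv_l in Hle; lra. }
    assert (0 <= K + D * u) by (unfold D; nra).
    assert (/e < 0) by (apply Rinv_lt_0_compat; lra).
    split. nra.
    assert (K + D < 0). { rewrite HM in Htau. replace (tau - tau) with 0 in Htau by ring.
      rewrite Rmult_0_r, exp_0 in Htau. nra. } lra. }
assert (Hcmp2 : Lambda_FP e tau1 a tau omega < Lam -> 0 < M a).
{ intros Hle. rewrite HFP in Hle. rewrite HMa.
  destruct (Rdichotomy _ _ (not_eq_sym He0)) as [Hp|Hn].
  - assert (1 < X). { unfold X. rewrite <- exp_0. apply exp_increasing. nra. }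
    assert (K * (1 - w) < Lam * (X - 1)).
    { apply (Rmult_lt_compat_r (X - 1)) in Hle; [|lra].
      unfold Rdiv in Hle. rewrite Rmult_assoc, Rinv_l in Hle; lra. }
    assert (0 < K + D * u) by (unfold D; nra).
    assert (0 < / e) by (apply Rinv_0_lt_compat; lra). nra.
  - assert (e < 0) by lra.
    assert (X < 1). { unfold X. rewrite <- exp_0. apply exp_increasing. nra. }
    assert (Lam * (X - 1) < K * (1 - w)).
    { apply (Rmult_lt_gt_compat_neg_l (X - 1)) in Hle; [|lra].
      unfold Rdiv in Hle. rewrite (Rmult_comm (X-1) (K * (1 - w) * / (X - 1))) in Hle.
      rewrite Rmult_assoc, Rinv_l in Hle; lra. }
    assert (K + D * u < 0) by (unfold D; nra).
    assert (/e < 0) by (apply Rinv_lt_0_compat; lra). nra. }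
split.
- intros Hle. destruct (Hcmp Hle) as [Ha HD].
  destruct (cross e K D tau heps HK HD) as [zh [H1 [H2 H3]]].
  exists zh. 
  assert (a <= zh). { destruct (Rle_or_lt a zh) as [h|h]; auto. specialize (H3 a h). rewrite <- HM in H3. lra. }
  assert (zh < tau). { destruct (Rlt_or_le zh tau) as [h|h]; auto. destruct h as [h|h].
     specialize (H1 tau h). rewrite <- HM in H1. lra. subst zh. rewrite <- HM in H2. lra. }
  split; [lra|split; [|split]].
  + intros z Hz. rewrite HM. apply H1; lra.
  + rewrite HM. exact H2.
  + intros z Hz. rewrite HM. apply H3; lra.
- intros Hlt z Hz. pose proof (Hcmp2 Hlt) as Ha.
  destruct (Rlt_or_le D 0) as [HD|HD].
  + destruct (cross e K D tau heps HK HD) as [zh [H1 [H2 H3]]].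
    assert (zh < a). { destruct (Rlt_or_le zh a) as [h|h]; auto. destruct h as [h|h].
      specialize (H1 a h). rewrite <- HM in H1. lra. subst zh. rewrite <- HM in H2. lra. }
    rewrite HM. apply H3. lra.
  + rewrite HM in Htau |- *. replace (tau - tau) with 0 in Htau by ring.
    rewrite Rmult_0_r, exp_0 in Htau.
    destruct (Rdichotomy _ _ (not_eq_sym He0)) as [Hp|Hn].
    * assert (0 < / e) by (apply Rinv_0_lt_compat; lra).
      pose proof (exp_pos (e * (tau - z))). assert (0 < K + D * exp (e * (tau - z))) by nra. nra.
    * assert (e < 0) by lra. assert (/e < 0) by (apply Rinv_lt_0_compat; lra). assert (0 < K + D * 1) by lra. exfalso. nra.
Qed.
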